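(* If $i \ne j \ne k \ne i$, then $w_{i,j,k}:=|\Lambda_i,\Lambda_j,\Lambda_k| \in I_{W_d}$.
   Context: Let $P_d$ be a convex polygon with $d\ge 4$ vertices $v_1,\dots,v_d$ (indices mod $d$) over a field $\mathbb{K}$ with no three edge lines concurrent. Set ${\bf v}_i=(v_i,1)$, ${\bf n}_i={\bf v}_i\times{\bf v}_{i+1}$, $\alpha_j=|{\bf v}_{j-1}\,{\bf v}_j\,{\bf v}_{j+1}|$, $\ell_j=|{\bf v}_j\,{\bf v}_{j+1}\,{\bf p}|$, $b_i=\alpha_i\prod_{j\ne i-1,i}\ell_j$; $W_d$ is the closure of the image of $p\mapsto(b_1,\dots,b_d)$ with ideal $I_{W_d}\subseteq S=\mathbb{K}[x_1,\ldots,x_d]$. $\Lambda_r=\frac{x_{r+1}}{\alpha_{r+1}}{\bf n}_{r+1}-\frac{x_r}{\alpha_r}{\bf n}_{r-1}\in S_1^3$, and $|\Lambda_i,\Lambda_j,\Lambda_k|$ is the determinant of the $3\times 3$ matrix of linear forms with these columns. *)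

(* Defs.v *)
From HB Require Import structures.
From mathcomp Require Import all_boot all_order all_algebra.
From mathcomp Require Import mpoly.
Set Implicit Arguments. Unset Strict Implicit. Unset Printing Implicit Defensive.
Import Order.TTheory GRing.Theory Num.Theory.
Local Open Scope ring_scope.

(* Indices are taken in 'I_d (index t of the paper is t-1 here), mod d. *)
Definition nxt d (i : 'I_d) : 'I_d := ordS i.
Definition prv d (i : 'I_d) : 'I_d := ord_pred i.

Definition vec3 (T : Type) (a b c : T) : 'I_3 -> T :=
  fun k => if val k == 0%N then a else if val k == 1%N then b else c.

Definition det3 (R : comNzRingType) (u v w : 'I_3 -> R) : R :=
  \det (\matrix_(a < 3, b < 3)
          (if val b == 0%N then u a else if val b == 1%N then v a else w a)).

Definition cross (R : comNzRingType) (u w : 'I_3 -> R) : 'I_3 -> R :=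
  vec3 (u (inord 1) * w (inord 2) - u (inord 2) * w (inord 1))
       (u (inord 2) * w (inord 0) - u (inord 0) * w (inord 2))
       (u (inord 0) * w (inord 1) - u (inord 1) * w (inord 0)).

Section Wachspress.
Variables (R : realFieldType) (d : nat) (v : 'I_d -> R * R).

Definition bv (i : 'I_d) : 'I_3 -> R := vec3 (v i).1 (v i).2 1.
Definition bp (p : R * R) : 'I_3 -> R := vec3 p.1 p.2 1.
Definition nrm (i : 'I_d) : 'I_3 -> R := cross (bv i) (bv (nxt i)).
Definition alpha (j : 'I_d) : R := det3 (bv (prv j)) (bv j) (bv (nxt j)).
Definition ell (j : 'I_d) (p : R * R) : R := det3 (bv j) (bv (nxt j)) (bp p).
Definition bcoord (p : R * R) (i : 'I_d) : R :=
  alpha i * \prod_(j : 'I_d | (j != prv i) && (j != i)) ell j p.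

(* f is in I_{W_d}: f vanishes on the image of p |-> (b_1(p),...,b_d(p)),
   equivalently on its Zariski closure W_d. *)
Definition in_IW (f : {mpoly R[d]}) : Prop :=
  forall p : R * R, f.@[bcoord p] = 0.

Definition Lambda (r : 'I_d) : 'I_3 -> {mpoly R[d]} :=
  fun a => 'X_(nxt r) * ((nrm (nxt r) a / alpha (nxt r))%:MP)
         - 'X_r * ((nrm (prv r) a / alpha r)%:MP).

Definition wijk (i j k : 'I_d) : {mpoly R[d]} := det3 (Lambda i) (Lambda j) (Lambda k).

(* Strictly convex polygon with vertices v_1,...,v_d listed in cyclic order
   (either orientation): every other vertex lies strictly on the same side
   of each edge line. *)
Definition convex_polygon : Prop :=
  exists s : R, (s = 1 \/ s = -1) /\
    forall (i k : 'I_d), k != i -> k != nxt i ->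
      0 < s * det3 (bv i) (bv (nxt i)) (bv k).

(* No three edge lines concurrent (in the projective plane). *)
Definition no_three_concurrent : Prop :=
  forall (i j k : 'I_d), i != j -> j != k -> k != i ->
    det3 (nrm i) (nrm j) (nrm k) != 0.

End Wachspress.

(* Main.v *)
Require Import Defs.
From HB Require Import structures.
From mathcomp Require Import all_boot all_order all_algebra.
From mathcomp Require Import mpoly.
From mathcomp Require Import zify ring.
Import Order.TTheory GRing.Theory Num.Theory.
Local Open Scope ring_scope.

Lemma valS d (r : 'I_d) : val (ordS r) = if r.+1 == d then 0%N else r.+1.
Proof.
rewrite /=; have := ltn_ord r; case: eqP => [->|H] h; first by rewrite modnn.
rewrite modn_small //; lia.
Qed.

Lemma valP d (r : 'I_d) : val (ord_pred r) = if (r:nat) == 0%N then d.-1 else (r:nat).-1.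
Proof.
rewrite /=; have := ltn_ord r; case: eqP => [->|H] h.
  rewrite add0n modn_small //; lia.
have -> : ((r + d).-1 = (r.-1) + d)%N by lia.
rewrite modnDr modn_small //; lia.
Qed.

Lemma nxt_prv d (r : 'I_d) : (3 <= d)%N -> nxt r != prv r.
Proof. move=> h; apply/eqP => /(congr1 (@nat_of_ord d)); rewrite valS valP; move: (ltn_ord r).
case: eqP => a; case: eqP => b; lia. Qed.

Lemma nxt_neq d (r : 'I_d) : (3 <= d)%N -> nxt r != r.
Proof. move=> h; apply/eqP => /(congr1 (@nat_of_ord d)); rewrite valS; move: (ltn_ord r).
case: eqP => a; lia. Qed.

Lemma prv_neq d (r : 'I_d) : (3 <= d)%N -> prv r != r.
Proof. move=> h; apply/eqP => /(congr1 (@nat_of_ord d)); rewrite valP; move: (ltn_ord r).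
case: eqP => a; lia. Qed.

Arguments nxt_prv {d}. Arguments nxt_neq {d}. Arguments prv_neq {d}.

Lemma det3E (R : comNzRingType) (u v w : 'I_3 -> R) :
  det3 u v w = u (inord 0) * (v (inord 1) * w (inord 2) - v (inord 2) * w (inord 1))
             - v (inord 0) * (u (inord 1) * w (inord 2) - u (inord 2) * w (inord 1))
             + w (inord 0) * (u (inord 1) * v (inord 2) - u (inord 2) * v (inord 1)).
Proof.
set U := fun n : nat => u (inord n).
set V := fun n : nat => v (inord n).
set W := fun n : nat => w (inord n).
have -> : det3 u v w = \det (\matrix_(a < 3, b < 3)
          (if val b == 0%N then U (val a) else if val b == 1%N then V (val a) else W (val a))).
  by rewrite /det3; congr (\det _); apply/matrixP => a b; rewrite !mxE /U /V /W !inord_val.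
rewrite (expand_det_col _ ord0) !big_ord_recr big_ord0 /=.
rewrite /cofactor !(expand_det_col _ ord0) !big_ord_recr !big_ord0 /=.
rewrite /cofactor !det_mx11 !mxE /=.
rewrite /U /V /W /=.
ring.
Qed.

Definition dot (R : comNzRingType) (a b : 'I_3 -> R) : R :=
  a (inord 0) * b (inord 0) + a (inord 1) * b (inord 1) + a (inord 2) * b (inord 2).

Arguments dot {R}.

Lemma det3_perp (R : comNzRingType) (u v w p : 'I_3 -> R) :
  p (inord 2) = 1 -> dot u p = 0 -> dot v p = 0 -> dot w p = 0 -> det3 u v w = 0.
Proof.
move=> hp hu hv hw.
have E : det3 u v w * p (inord 2) =
   dot u p * (v (inord 0) * w (inord 1) - v (inord 1) * w (inord 0))
 + dot v p * (w (inord 0) * u (inord 1) - w (inord 1) * u (inord 0))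
 + dot w p * (u (inord 0) * v (inord 1) - u (inord 1) * v (inord 0)).
  rewrite det3E /dot; ring.
by move: E; rewrite hp mulr1 hu hv hw !mul0r !addr0.
Qed.

Arguments det3_perp {R u v w p}.

Lemma vec30 (T : Type) (a b c : T) : vec3 a b c (inord 0) = a.
Proof. by rewrite /vec3 /= inordK. Qed.
Lemma vec31 (T : Type) (a b c : T) : vec3 a b c (inord 1) = b.
Proof. by rewrite /vec3 /= inordK. Qed.
Lemma vec32 (T : Type) (a b c : T) : vec3 a b c (inord 2) = c.
Proof. by rewrite /vec3 /= inordK. Qed.

Lemma dot_cross (R : comNzRingType) (a b c : 'I_3 -> R) :
  dot (cross a b) c = det3 a b c.
Proof. rewrite det3E /dot /cross vec30 vec31 vec32; ring. Qed.

Lemma meval_det3 (R : comNzRingType) n (x : 'I_n -> R) (a b c : 'I_3 -> {mpoly R[n]}) :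
  (det3 a b c).@[x] = det3 (fun t => (a t).@[x]) (fun t => (b t).@[x]) (fun t => (c t).@[x]).
Proof. by rewrite !det3E !(mevalB, mevalD, mevalM). Qed.

Theorem theorem4p1 (R : realFieldType) (d : nat) (v : 'I_d -> R * R)
  (hd : (4 <= d)%N)
  (hconv : convex_polygon v)
  (hconc : no_three_concurrent v)
  (i j k : 'I_d) (hij : i != j) (hjk : j != k) (hki : k != i) :
  in_IW v (wijk v i j k).
Proof.
have hd3 : (3 <= d)%N by apply: leq_trans hd.
have alpha_nz : forall r : 'I_d, alpha v r != 0.
  move=> r; case: hconv => s [_ hs].
  have := hs (prv r) (nxt r).
  rewrite /nxt /prv ord_predK => H.
  have := H (nxt_prv r hd3) (nxt_neq r hd3).
  rewrite /alpha; apply: contraTneq => ->; by rewrite mulr0 ltxx.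
move=> p; rewrite /wijk meval_det3.
have bp2 : bp p (inord 2) = 1 by rewrite /bp vec32.
have key : forall r : 'I_d, dot (fun t => (Lambda v r t).@[bcoord v p]) (bp p) = 0.
  move=> r.
  set Q := \prod_(j0 : 'I_d | j0 != r) ell v j0 p.
  have E : dot (fun t => (Lambda v r t).@[bcoord v p]) (bp p) =
     bcoord v p (nxt r) / alpha v (nxt r) * dot (nrm v (nxt r)) (bp p)
   - bcoord v p r / alpha v r * dot (nrm v (prv r)) (bp p).
    rewrite /dot /Lambda !(mevalB, mevalM, mevalXU, mevalC); ring.
  rewrite E !dot_cross -/(ell v (nxt r) p) -/(ell v (prv r) p).
  have E1 : bcoord v p (nxt r) / alpha v (nxt r) * ell v (nxt r) p = Q.
    rewrite /bcoord [alpha _ _ * _]mulrC mulfK ?alpha_nz //.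
    rewrite /Q [RHS](bigD1 (nxt r)) /= ?(nxt_neq r hd3) // mulrC.
    by rewrite /nxt /prv ordSK.
  have E2 : bcoord v p r / alpha v r * ell v (prv r) p = Q.
    rewrite /bcoord [alpha _ _ * _]mulrC mulfK ?alpha_nz //.
    rewrite /Q [RHS](bigD1 (prv r)) /= ?(prv_neq r hd3) // mulrC.
    by congr (_ * _); apply: eq_bigl => t; rewrite andbC.
  by rewrite E1 E2 subrr.
exact: (det3_perp bp2 (key i) (key j) (key k)).
Qed.
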